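(* If $\delta$ is a small perturbation of the DR data $(L,b)\underset{p}{\overset{i}{\rightleftarrows}}(M,b),\ h$, then the perturbed data $(L,b_1)\underset{p_1}{\overset{i_1}{\rightleftarrows}}(M,b+\delta),\ h_1$ is a DR if and only if $p\,(A h^{2} A + A h + h A)\,i = 0$.
   Context: An HE data (homotopy equivalence data) consists of two (co)chain complexes $(L,b)$, $(M,b)$, quasi-isomorphisms $i:L\to M$ and $p:M\to L$, and a homotopy $h$ on $M$ with $ip = 1 + bh + hb$. A DR (deformation retract) is an HE data which in addition satisfies $pi = 1$. A perturbation $\delta$ is a map on $M$ of the same degree as $b$ with $(b+\delta)^2=0$; it is small if $1-\delta h$ is invertible. In that case $A=(1-\delta h)^{-1}\delta$, and the perturbed data is $i_1 = i + hAi$, $p_1 = p + pAh$, $h_1 = h + hAh$, $b_1 = b + pAi$ (which is again an HE data by the main perturbation lemma). *)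

(* Defs.v *)
(* Complexes are modelled as abelian groups (zmodType) with
   additive endomorphisms as differentials. *)
From HB Require Import structures.
From mathcomp Require Import all_boot all_order all_algebra.
Set Implicit Arguments. Unset Strict Implicit. Unset Printing Implicit Defensive.
Import GRing.Theory.
Local Open Scope ring_scope.

Definition additive_map (U V : zmodType) (f : U -> V) : Prop :=
  forall x y, f (x - y) = f x - f y.

Record HE_data (L M : zmodType) (bL : L -> L) (bM : M -> M)
    (i : L -> M) (p : M -> L) (h : M -> M) : Prop := {
  HE_bL_add : additive_map bL;
  HE_bM_add : additive_map bM;
  HE_i_add : additive_map i;
  HE_p_add : additive_map p;
  HE_h_add : additive_map h;
  HE_bL_sq : forall x, bL (bL x) = 0;
  HE_bM_sq : forall m, bM (bM m) = 0;
  HE_i_chain : forall x, bM (i x) = i (bL x);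
  HE_p_chain : forall m, bL (p m) = p (bM m);
  HE_homotopy : forall m, i (p m) = m + bM (h m) + h (bM m)
}.

Definition DR (L M : zmodType) (bL : L -> L) (bM : M -> M)
    (i : L -> M) (p : M -> L) (h : M -> M) : Prop :=
  HE_data bL bM i p h /\ forall x, p (i x) = x.

(* delta is a perturbation of the differential bM: (bM + delta)^2 = 0 *)
Definition perturbation (M : zmodType) (bM delta : M -> M) : Prop :=
  additive_map delta /\ forall m, bM (bM m) + bM (delta m) + delta (bM m) + delta (delta m) = 0.

Definition inverse_of_one_minus (M : zmodType) (delta h g : M -> M) : Prop :=
  (forall m, g (m - delta (h m)) = m) /\ (forall m, g m - delta (h (g m)) = m).

(* Main.v *)
Require Import Defs.
From mathcomp Require Import all_boot all_order all_algebra.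
Import GRing.Theory.
Local Open Scope ring_scope.
Set Implicit Arguments. Unset Strict Implicit. Unset Printing Implicit Defensive.

Inductive zexp := ZAt of nat | ZAdd of zexp & zexp | ZOpp of zexp | ZZero.

Fixpoint zeval (V : zmodType) (env : seq V) (e : zexp) : V :=
  match e with
  | ZAt n => nth 0 env n
  | ZAdd a b => zeval env a + zeval env b
  | ZOpp a => - zeval env a
  | ZZero => 0
  end.

Fixpoint ladd (l1 l2 : seq int) : seq int :=
  match l1, l2 with
  | [::], _ => l2
  | _, [::] => l1
  | a :: l1', b :: l2' => (a + b) :: ladd l1' l2'
  end.

Definition lopp (l : seq int) := map (fun c => - c) l.
Definition latom n : seq int := rcons (nseq n 0) 1.

Fixpoint nf (e : zexp) : seq int :=
  match e with
  | ZAt n => latom n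
  | ZAdd a b => ladd (nf a) (nf b)
  | ZOpp a => lopp (nf a)
  | ZZero => [::]
  end.

Fixpoint leval (V : zmodType) (env : seq V) (l : seq int) : V :=
  match l with
  | [::] => 0
  | c :: l' => (head 0 env) *~ c + leval (behead env) l'
  end.

Lemma leval_add (V : zmodType) (l1 l2 : seq int) (env : seq V) :
  leval env (ladd l1 l2) = leval env l1 + leval env l2.
Proof.
elim: l1 l2 env => [|a l1 IH] [|b l2] env /=; rewrite ?add0r ?addr0 //.
by rewrite IH mulrzDr addrACA.
Qed.

Lemma leval_opp (V : zmodType) (l : seq int) (env : seq V) :
  leval env (lopp l) = - leval env l.
Proof.
elim: l env => [|a l IH] env /=; first by rewrite oppr0.
by rewrite IH mulrNz opprD.
Qed.

Lemma leval_atom (V : zmodType) n (env : seq V) :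
  leval env (latom n) = nth 0 env n.
Proof.
elim: n env => [|n IH] [|x env] /=; rewrite ?mulr1z ?addr0 ?mulr0z ?add0r ?IH ?nth_nil //.
Qed.

Lemma nf_ok (V : zmodType) (env : seq V) e : zeval env e = leval env (nf e).
Proof.
elim: e => [n|a IHa b IHb|a IHa|] /=.
- by rewrite leval_atom.
- by rewrite leval_add IHa IHb.
- by rewrite leval_opp IHa.
- by [].
Qed.

Lemma leval_zero (V : zmodType) (env : seq V) l :
  all (fun c => c == 0) l -> leval env l = 0.
Proof.
elim: l env => [|a l IH] env //= /andP[/eqP -> /IH ->].
by rewrite mulr0z addr0.
Qed.

Lemma zsolve_ok (V : zmodType) (env : seq V) e1 e2 :
  all (fun c => c == 0) (nf (ZAdd e1 (ZOpp e2))) -> zeval env e1 = zeval env e2.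
Proof.
move=> H; apply/eqP; rewrite -subr_eq0; apply/eqP.
by have := leval_zero env H; rewrite -nf_ok.
Qed.

Ltac zindex x l :=
  lazymatch l with
  | cons x _ => constr:(0%N)
  | cons _ ?l' => let n := zindex x l' in constr:(S n)
  end.

Ltac zcollect e acc :=
  lazymatch e with
  | (?a + ?b)%R => let acc := zcollect a acc in zcollect b acc
  | (- ?a)%R => zcollect a acc
  | 0%R => acc
  | _ => match constr:(tt) with
         | _ => let _ := zindex e acc in acc
         | _ => constr:(cons e acc)
         end
  end.

Ltac zreify e env :=
  lazymatch e with
  | (?a + ?b)%R => let x := zreify a env in let y := zreify b env in constr:(ZAdd x y)
  | (- ?a)%R => let x := zreify a env in constr:(ZOpp x)
  | 0%R => constr:(ZZero)
  | _ => let n := zindex e env in constr:(ZAt n)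
  end.

Ltac zsolve :=
  lazymatch goal with
  | |- @eq ?T ?l ?r =>
    let env0 := zcollect l (@nil T) in
    let env := zcollect r env0 in
    let e1 := zreify l env in
    let e2 := zreify r env in
    change (zeval env e1 = zeval env e2);
    apply: zsolve_ok; vm_compute; reflexivity
  end.


Section AM.
Variables (U V : zmodType) (f : U -> V) (Hf : additive_map f).
Lemma am0 : f 0 = 0. Proof. by have := Hf 0 0; rewrite !subrr. Qed.
Lemma amN x : f (- x) = - f x. Proof. by have := Hf 0 x; rewrite !sub0r am0 sub0r. Qed.
Lemma amD x y : f (x + y) = f x + f y.
Proof. by rewrite -{1}(opprK y) Hf amN opprK. Qed.
End AM.

Lemma am_comp (U V W : zmodType) (f : V -> W) (g : U -> V) :
  additive_map f -> additive_map g -> additive_map (fun x => f (g x)).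
Proof. by move=> Hf Hg x y; rewrite Hg Hf. Qed.

Lemma lin1 (V : zmodType) (a b l r : V) : a = b -> l - r = a - b -> l = r.
Proof. by move=> -> /eqP; rewrite subrr subr_eq0 => /eqP. Qed.
Lemma lin2 (V : zmodType) (a1 b1 a2 b2 l r : V) : a1 = b1 -> a2 = b2 ->
  l - r = (a1 - b1) + (a2 - b2) -> l = r.
Proof. by move=> -> -> /eqP; rewrite !subrr addr0 subr_eq0 => /eqP. Qed.
Lemma lin3 (V : zmodType) (a1 b1 a2 b2 a3 b3 l r : V) : a1 = b1 -> a2 = b2 -> a3 = b3 ->
  l - r = (a1 - b1) + (a2 - b2) + (a3 - b3) -> l = r.
Proof. by move=> -> -> -> /eqP; rewrite !subrr !addr0 subr_eq0 => /eqP. Qed.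
Lemma lin4 (V : zmodType) (a1 b1 a2 b2 a3 b3 a4 b4 l r : V) : a1 = b1 -> a2 = b2 -> a3 = b3 -> a4 = b4 ->
  l - r = (a1 - b1) + (a2 - b2) + (a3 - b3) + (a4 - b4) -> l = r.
Proof. by move=> -> -> -> -> /eqP; rewrite !subrr !addr0 subr_eq0 => /eqP. Qed.
Lemma lin6 (V : zmodType) (a1 b1 a2 b2 a3 b3 a4 b4 a5 b5 a6 b6 l r : V) :
  a1 = b1 -> a2 = b2 -> a3 = b3 -> a4 = b4 -> a5 = b5 -> a6 = b6 ->
  l - r = (a1 - b1) + (a2 - b2) + (a3 - b3) + (a4 - b4) + (a5 - b5) + (a6 - b6) -> l = r.
Proof. by move=> -> -> -> -> -> -> /eqP; rewrite !subrr !addr0 subr_eq0 => /eqP. Qed.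

Ltac expand := repeat match goal with
  | H : additive_map ?f |- context[?f (?x + ?y)] => rewrite (amD H)
  | H : additive_map ?f |- context[?f (- ?x)] => rewrite (amN H)
  | H : additive_map ?f |- context[?f 0] => rewrite (am0 H)
  end.

Theorem mainTheorem2 (L M : zmodType) (bL : L -> L) (bM : M -> M)
    (i : L -> M) (p : M -> L) (h : M -> M) (delta g : M -> M) :
  DR bL bM i p h ->
  perturbation bM delta ->
  inverse_of_one_minus delta h g ->
  let A := fun m => g (delta m) in
  DR (fun x => bL x + p (A (i x)))
     (fun m => bM m + delta m)
     (fun x => i x + h (A (i x)))
     (fun m => p m + p (A (h m)))
     (fun m => h m + h (A (h m)))
  <-> (forall x, p (A (h (h (A (i x)))) + A (h (i x)) + h (A (i x))) = 0).
Proof.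
move=> [HE Hpi] [Hd Hpert] [Hg1 Hg2] A.
have HbL := HE_bL_add HE; have HbM := HE_bM_add HE; have Hi := HE_i_add HE.
have Hp := HE_p_add HE; have Hh := HE_h_add HE.
have Hg : additive_map g.
  move=> x y; rewrite -{1}(Hg2 x) -{1}(Hg2 y).
  set u := g x; set v := g y.
  have -> : u - delta (h u) - (v - delta (h v)) = (u - v) - delta (h (u - v)).
    rewrite !(amD Hh) !(amN Hh) !(amD Hd) !(amN Hd); zsolve.
  by rewrite Hg1.
have HA : additive_map A by apply: am_comp.
have F1 : forall m, A m = delta m + delta (h (A m)).
  move=> m; rewrite /A; apply: (lin1 (Hg2 (delta m))); zsolve.
have F2 : forall m, A m = delta m + A (h (delta m)).
  move=> m; have : A (m - h (delta m)) = delta m by rewrite /A Hd Hg1.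
  rewrite HA => E; apply: (lin1 E); zsolve.
clearbody A.
have bb := HE_bM_sq HE.
have K : forall m, bM (A m) + A (bM m) + A (A m) + A (bM (h (A m))) + A (h (bM (A m))) = 0.
  move=> m.
  have [n [Hmn HAm]] : exists n, m = n - h (delta n) /\ A m = delta n.
    have Hm : m = (m + h (A m)) - h (delta (m + h (A m))).
      have E : h (A m) = h (delta m) + h (delta (h (A m))) by rewrite {1}F1 (amD Hh).
      expand; apply: (lin1 (esym E)); zsolve.
    exists (m + h (A m)); split => //.
    rewrite {1}Hm HA; apply: (lin1 (F2 (m + h (A m)))); zsolve.
  set k := _ + A (h (bM (A m))).
  have -> : k = g (k - delta (h k)) by rewrite Hg1.
  suff -> : k - delta (h k) = 0 by rewrite (am0 Hg).
  rewrite /k HAm; expand.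
  have E5 : delta (bM m) = delta (bM n) - delta (bM (h (delta n))) by rewrite {1}Hmn; expand.
  apply: (lin6 (F1 (bM m)) (F1 (delta n)) (F1 (bM (h (delta n)))) (F1 (h (bM (delta n)))) E5 (Hpert n)).
  rewrite bb; zsolve.
have hom := HE_homotopy HE.
split.
  move=> [_ Hpi'] x; have := Hpi' x => /=; expand => E.
  expand; apply: (lin2 E (esym (Hpi x))); zsolve.
move=> C; split; last first.
  move=> x /=; have := C x; expand => Cx; expand.
  apply: (lin2 (Hpi x) Cx); zsolve.
constructor.
- move=> x y /=; expand; zsolve.
- move=> x y /=; expand; zsolve.
- move=> x y /=; expand; zsolve.
- move=> x y /=; expand; zsolve.
- move=> x y /=; expand; zsolve.
- move=> x /=; have := congr1 p (K (i x)); expand => EK.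
  rewrite ?(HE_p_chain HE) -?(HE_i_chain HE) ?hom; expand.
  apply: (lin2 EK (HE_bL_sq HE x)); zsolve.
- move=> m /=; expand; apply: (lin1 (Hpert m)); zsolve.
- move=> x /=; have := congr1 h (K (i x)); expand => EK.
  rewrite -?(HE_i_chain HE) ?hom; expand.
  apply: (lin2 (esym (F1 (i x))) (esym EK)); zsolve.
- move=> m /=; have := congr1 p (K (h m)); have := congr1 p (F2 m); expand => E2 EK.
  rewrite ?(HE_p_chain HE) ?hom; expand.
  apply: (lin2 E2 EK); zsolve.
- move=> m /=; have := congr1 h (K (h m)); have := congr1 h (F2 m); expand => E2 EK.
  rewrite ?hom; expand.
  apply: (lin3 (F1 (h m)) E2 EK); zsolve.
Qed.
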